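(* Let $H$ be the orthocenter of $T=P_1P_2P_3$. (i) For each $i$, the line $P_iP_i''$ is the altitude of $T$ from $P_i$; in particular the three lines $P_iP_i''$ concur at $H$, so $T$ and $T''=P_1''P_2''P_3''$ are perspective with perspector $H$, and the perpendiculars from $P_i''$ to the side of $T$ opposite $P_i$ all pass through $H$. (ii) For each $i$, with $\{i,j,k\}=\{1,2,3\}$, the perpendicular from $P_i$ to the line $P_j''P_k''$ passes through $-M$ (the reflection of $M$ in $O$). Hence $T$ and $T''$ are orthologic with orthology centers $H$ and $-M$.
   Context: Let $a>b>0$ and $c>0$ with $c^2=a^2-b^2$. Let $\mathcal{E}$ be the ellipse $x^2/a^2+y^2/b^2=1$ with center $O=(0,0)$, parametrized by $P(t)=(a\cos t,b\sin t)$. Fix $u\in\mathbb{R}$ and let $M=(a\cos u,b\sin u)$. For $i=1,2,3$ let $t_i=-u/3-2\pi(i-1)/3$, $P_i=P(t_i)$, and $P_i''=\left(\frac{c^2\cos^3 t_i}{a},-\frac{c^2\sin^3 t_i}{b}\right)$ (the center of curvature of $\mathcal{E}$ at $P_i$). Two triangles $ABC$, $DEF$ are orthologic if the perpendiculars from $A,B,C$ to $EF,FD,DE$ respectively are concurrent; the concurrence points of these perpendiculars and of the perpendiculars from $D,E,F$ to $BC,CA,AB$ are the orthology centers. *)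

(* Defs.v *)
From Stdlib Require Import Reals Lra.
Open Scope R_scope.

Definition pt := (R * R)%type.
Definition padd (p q : pt) : pt := (fst p + fst q, snd p + snd q).
Definition psub (p q : pt) : pt := (fst p - fst q, snd p - snd q).
Definition popp (p : pt) : pt := (- fst p, - snd p).
Definition dot (p q : pt) : R := fst p * fst q + snd p * snd q.
Definition cross (p q : pt) : R := fst p * snd q - snd p * fst q.

Definition on_line (X A B : pt) : Prop := A <> B /\ cross (psub B A) (psub X A) = 0.
Definition collinear (A B C : pt) : Prop := cross (psub B A) (psub C A) = 0.

Definition on_perp (X A E F : pt) : Prop := E <> F /\ dot (psub X A) (psub F E) = 0.

Definition is_orthocenter (A B C H : pt) : Prop :=
  ~ collinear A B C /\
  on_perp H A B C /\ on_perp H B C A /\ on_perp H C A B.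

Definition perspector (A B C D E F X : pt) : Prop :=
  on_line X A D /\ on_line X B E /\ on_line X C F.

Definition orthology_center (A B C D E F X : pt) : Prop :=
  on_perp X A E F /\ on_perp X B F D /\ on_perp X C D E.

Definition orthologic_with_centers (A B C D E F X Y : pt) : Prop :=
  orthology_center A B C D E F X /\ orthology_center D E F A B C Y.

Definition Pe (a b t : R) : pt := (a * cos t, b * sin t).
Definition tpar (u : R) (i : nat) : R := - u / 3 - 2 * PI * (INR i - 1) / 3.
Definition Pi (a b u : R) (i : nat) : pt := Pe a b (tpar u i).
(* center of curvature of the ellipse at P(t_i) *)
Definition Pi2 (a b c u : R) (i : nat) : pt :=
  (c ^ 2 * (cos (tpar u i)) ^ 3 / a, - (c ^ 2 * (sin (tpar u i)) ^ 3 / b)).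

Definition perm3 (i j k : nat) : Prop :=
  (i = 1 \/ i = 2 \/ i = 3)%nat /\ (j = 1 \/ j = 2 \/ j = 3)%nat /\
  (k = 1 \/ k = 2 \/ k = 3)%nat /\ i <> j /\ j <> k /\ i <> k.

(* Main.v *)
Require Import Defs.
From Stdlib Require Import Reals Lra Nsatz.
Open Scope R_scope.

Ltac nz := repeat match goal with H : context[_ / _] |- _ => clear H
   | H : ?P |- _ => match type of P with Prop => lazymatch P with @eq R _ _ => fail | _ => clear H end end end;
  cbn [pow] in *; nsatz.
Ltac dz := lazymatch goal with |- _ = 0 => idtac | |- _ => apply Rminus_diag_uniq end; field_simplify; [ match goal with
   | |- ?n / _ = 0 => let HN := fresh in assert (HN : n = 0) by nz; rewrite HN; unfold Rdiv; ring
   | |- _ = 0 => nz end | .. ]; repeat split; (apply Rgt_not_eq || apply Rlt_not_eq || lra); lra.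

Lemma cos3 x : cos (3*x) = 4 * cos x ^ 3 - 3 * cos x.
Proof.
  replace (3*x) with (x + (x + x)) by ring.
  repeat rewrite sin_plus; repeat rewrite cos_plus; repeat rewrite sin_plus. pose proof (sin2_cos2 x). unfold Rsqr in *. nz.
Qed.
Lemma sin3 x : sin (3*x) = 3 * sin x - 4 * sin x ^ 3.
Proof.
  replace (3*x) with (x + (x + x)) by ring.
  repeat rewrite sin_plus; repeat rewrite cos_plus; repeat rewrite sin_plus. pose proof (sin2_cos2 x). unfold Rsqr in *. nz.
Qed.
Lemma cos23 : cos (2*PI/3) = -1/2.
Proof. replace (2*PI/3) with (PI - PI/3) by field. rewrite cos_minus, cos_PI, sin_PI, cos_PI3. lra. Qed.
Lemma sin23 : sin (2*PI/3) = sqrt 3/2.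
Proof. replace (2*PI/3) with (PI - PI/3) by field. rewrite sin_minus, cos_PI, sin_PI, sin_PI3. lra. Qed.

Lemma vec_par (x1 x2 y1 y2 v1 v2 : R) : (v1, v2) <> (0, 0) ->
  x1 * v1 + x2 * v2 = 0 -> y1 * v1 + y2 * v2 = 0 -> x1 * y2 - x2 * y1 = 0.
Proof.
  intros hv hx hy.
  assert (E1 : (x1 * y2 - x2 * y1) * v1 = y2 * (x1 * v1 + x2 * v2) - x2 * (y1 * v1 + y2 * v2)) by ring.
  assert (E2 : (x1 * y2 - x2 * y1) * v2 = - y1 * (x1 * v1 + x2 * v2) + x1 * (y1 * v1 + y2 * v2)) by ring.
  rewrite hx, hy in E1, E2.
  destruct (Req_dec (x1 * y2 - x2 * y1) 0) as [h|h]; auto.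
  exfalso. apply hv. f_equal.
  - apply (Rmult_eq_reg_l (x1 * y2 - x2 * y1)); auto. lra.
  - apply (Rmult_eq_reg_l (x1 * y2 - x2 * y1)); auto. lra.
Qed.

Lemma cancel_div k a x y : k <> 0 -> a <> 0 -> k * x / a = k * y / a -> x = y.
Proof. intros hk ha e. apply (Rmult_eq_reg_l (k / a)). 2: unfold Rdiv; apply Rmult_integral_contrapositive_currified; auto; apply Rinv_neq_0_compat; auto.
  replace (k / a * x) with (k * x / a) by (field; auto). rewrite e. field; auto. Qed.

Definition Q (a b c t : R) : pt := (c ^ 2 * (cos t) ^ 3 / a, - (c ^ 2 * (sin t) ^ 3 / b)).

Lemma core (a b c u t tm tp : R) (H : pt)
  (hab : a > b) (hb : b > 0) (hc : c > 0) (hc2 : c ^ 2 = a ^ 2 - b ^ 2)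
  (hcm : cos tm = - cos t / 2 + sqrt 3 * sin t / 2)
  (hsm : sin tm = - sin t / 2 - sqrt 3 * cos t / 2)
  (hcp : cos tp = - cos t / 2 - sqrt 3 * sin t / 2)
  (hsp : sin tp = - sin t / 2 + sqrt 3 * cos t / 2)
  (hcu : cos u = 4 * cos t ^ 3 - 3 * cos t)
  (hsu : sin u = - (3 * sin t - 4 * sin t ^ 3))
  (hH : dot (psub H (Pe a b t)) (psub (Pe a b tp) (Pe a b tm)) = 0) :
  Pe a b t <> Q a b c t /\
  on_perp (Q a b c t) (Pe a b t) (Pe a b tm) (Pe a b tp) /\
  on_line H (Pe a b t) (Q a b c t) /\
  on_perp H (Q a b c t) (Pe a b tm) (Pe a b tp) /\
  on_perp (popp (Pe a b u)) (Pe a b t) (Q a b c tm) (Q a b c tp).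
Proof.
  pose proof (sin2_cos2 t) as hsc. unfold Rsqr in hsc.
  assert (hr : sqrt 3 * sqrt 3 = 3) by (apply sqrt_sqrt; lra).
  assert (hr0 : sqrt 3 > 0) by (apply sqrt_lt_R0; lra).
  assert (ha : a > 0) by lra.
  unfold Q, on_perp, on_line, popp, Pe, dot, psub, cross in *; cbn [fst snd] in *.
  rewrite hcm, hsm, hcp, hsp in *. rewrite hcu, hsu.
  set (C := cos t) in *. set (S := sin t) in *. set (r := sqrt 3) in *. clearbody C S r. clear hcm hsm hcp hsp hcu hsu.
  destruct H as [h1 h2]; cbn [fst snd] in *.
  assert (hv : (a * (- C / 2 - r * S / 2) - a * (- C / 2 + r * S / 2),
                b * (- S / 2 + r * C / 2) - b * (- S / 2 - r * C / 2)) <> (0, 0)).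
  { intro e. injection e as e1 e2.
    assert (S = 0) by (apply (Rmult_eq_reg_l (a * r)); nra).
    assert (C = 0) by (apply (Rmult_eq_reg_l (b * r)); nra). nra. }
  assert (hne : (a * C, b * S) <> (c ^ 2 * C ^ 3 / a, - (c ^ 2 * S ^ 3 / b))).
  { intro e. injection e as e1 e2.
    assert (e2' : S * (b ^ 2 + c ^ 2 * S ^ 2) = 0).
    { apply (Rmult_eq_reg_l (/ b)). 2: apply Rinv_neq_0_compat; lra.
      rewrite Rmult_0_r. replace (/ b * (S * (b ^ 2 + c ^ 2 * S ^ 2))) with (b * S + c^2 * S^3 / b) by (field; lra).
      rewrite e2. field. lra. }
    assert (hS : S = 0).
    { destruct (Rmult_integral _ _ e2') as [h|h]; auto. nra. }
    assert (e1' : C * (a ^ 2 - c ^ 2 * C ^ 2) = 0).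
    { apply (Rmult_eq_reg_l (/ a)). 2: apply Rinv_neq_0_compat; lra.
      rewrite Rmult_0_r. replace (/ a * (C * (a ^ 2 - c ^ 2 * C ^ 2))) with (a * C - c^2 * C^3 / a) by (field; lra).
      rewrite e1. field. lra. }
    rewrite hS in hsc. destruct (Rmult_integral _ _ e1') as [h|h]; nra. }
  assert (P2 : (c ^ 2 * C ^ 3 / a - a * C) * (a * (- C / 2 - r * S / 2) - a * (- C / 2 + r * S / 2)) +
     (- (c ^ 2 * S ^ 3 / b) - b * S) * (b * (- S / 2 + r * C / 2) - b * (- S / 2 - r * C / 2)) = 0).
  { dz. }
  assert (hpp : (a * (- C / 2 + r * S / 2), b * (- S / 2 - r * C / 2)) <>
    (a * (- C / 2 - r * S / 2), b * (- S / 2 + r * C / 2))).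
  { intro e. injection e as e1 e2. apply hv. rewrite e1, e2. f_equal; ring. }
  split; [exact hne|].
  split; [split; [exact hpp | exact P2]|].
  split; [split; [exact hne|]|].
  { eapply vec_par; [exact hv | exact P2 | exact hH]. }
  split; [split; [exact hpp | lra]|].
  split.
  - intro e. injection e as e1 e2.
    assert (E1 : (- C / 2 - r * S / 2) ^ 3 - (- C / 2 + r * S / 2) ^ 3 = - 3 * r * S / 4) by dz.
    assert (E2 : (- S / 2 + r * C / 2) ^ 3 - (- S / 2 - r * C / 2) ^ 3 = 3 * r * C / 4) by dz.
    assert (hc0 : c ^ 2 > 0) by nra.
    assert (F1 : (- C / 2 - r * S / 2) ^ 3 = (- C / 2 + r * S / 2) ^ 3).
    { symmetry. apply (cancel_div (c ^ 2) a); try lra. }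
    assert (F2 : (- S / 2 + r * C / 2) ^ 3 = (- S / 2 - r * C / 2) ^ 3).
    { symmetry. apply (cancel_div (c ^ 2) b); try lra. }
    rewrite F1 in E1. rewrite F2 in E2.
    assert (S = 0) by nra. assert (C = 0) by nra. nra.
  - dz.
Qed.

Lemma cs_of x y k : x = y + 2 * INR k * PI -> cos x = cos y /\ sin x = sin y.
Proof. intros ->. split; [apply cos_period | apply sin_period]. Qed.

Lemma minus23 t : cos (t - 2*PI/3) = - cos t / 2 + sqrt 3 * sin t / 2 /\
                  sin (t - 2*PI/3) = - sin t / 2 - sqrt 3 * cos t / 2.
Proof. rewrite cos_minus, sin_minus, cos23, sin23. split; field. Qed.
Lemma plus23 t : cos (t + 2*PI/3) = - cos t / 2 - sqrt 3 * sin t / 2 /\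
                  sin (t + 2*PI/3) = - sin t / 2 + sqrt 3 * cos t / 2.
Proof. rewrite cos_plus, sin_plus, cos23, sin23. split; field. Qed.

Lemma u_of u i : (i = 1 \/ i = 2 \/ i = 3)%nat ->
  cos u = 4 * cos (tpar u i) ^ 3 - 3 * cos (tpar u i) /\
  sin u = - (3 * sin (tpar u i) - 4 * sin (tpar u i) ^ 3).
Proof.
  intros hi. rewrite <- cos3, <- sin3.
  assert (e : - u = 3 * tpar u i + 2 * INR (i - 1) * PI).
  { unfold tpar. destruct hi as [e|[e|e]]; subst i; simpl; field. }
  rewrite <- (cos_neg u), <- (Ropp_involutive (sin u)), <- sin_neg, e, cos_period, sin_period.
  split; reflexivity.
Qed.

Lemma on_perp_swap X A E F : on_perp X A E F -> on_perp X A F E.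
Proof. unfold on_perp, dot, psub; cbn [fst snd]. intros [h1 h2]. split; [auto|lra]. Qed.

Lemma core_i (a b c u : R) (H : pt) (i m p : nat)
  (hab : a > b) (hb : b > 0) (hc : c > 0) (hc2 : c ^ 2 = a ^ 2 - b ^ 2)
  (hi : ((i = 1 /\ m = 2 /\ p = 3) \/ (i = 2 /\ m = 3 /\ p = 1) \/ (i = 3 /\ m = 1 /\ p = 2))%nat)
  (hH : on_perp H (Pi a b u i) (Pi a b u m) (Pi a b u p)) :
  Pi a b u i <> Pi2 a b c u i /\
  on_perp (Pi2 a b c u i) (Pi a b u i) (Pi a b u m) (Pi a b u p) /\
  on_line H (Pi a b u i) (Pi2 a b c u i) /\
  on_perp H (Pi2 a b c u i) (Pi a b u m) (Pi a b u p) /\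
  on_perp (popp (Pe a b u)) (Pi a b u i) (Pi2 a b c u m) (Pi2 a b c u p).
Proof.
  destruct hH as [_ hH].
  assert (hu : (i = 1 \/ i = 2 \/ i = 3)%nat) by (destruct hi as [[-> _]|[[-> _]|[-> _]]]; auto).
  destruct (u_of u i hu) as [hcu hsu].
  destruct (minus23 (tpar u i)) as [hm1 hm2].
  destruct (plus23 (tpar u i)) as [hp1 hp2].
  destruct hi as [[-> [-> ->]]|[[-> [-> ->]]|[-> [-> ->]]]].
  - assert (e2 : tpar u 2 = tpar u 1 - 2*PI/3 + 2 * INR 0 * PI) by (unfold tpar; simpl; field).
    assert (e3 : tpar u 1 + 2*PI/3 = tpar u 3 + 2 * INR 1 * PI) by (unfold tpar; simpl; field).
    destruct (cs_of _ _ _ e2) as [c2 s2]. destruct (cs_of _ _ _ e3) as [c3 s3].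
    apply (core a b c u (tpar u 1) (tpar u 2) (tpar u 3) H); auto; congruence.
  - assert (e2 : tpar u 3 = tpar u 2 - 2*PI/3 + 2 * INR 0 * PI) by (unfold tpar; simpl; field).
    assert (e3 : tpar u 1 = tpar u 2 + 2*PI/3 + 2 * INR 0 * PI) by (unfold tpar; simpl; field).
    destruct (cs_of _ _ _ e2) as [c2 s2]. destruct (cs_of _ _ _ e3) as [c3 s3].
    apply (core a b c u (tpar u 2) (tpar u 3) (tpar u 1) H); auto; congruence.
  - assert (e2 : tpar u 1 = tpar u 3 - 2*PI/3 + 2 * INR 1 * PI) by (unfold tpar; simpl; field).
    assert (e3 : tpar u 2 = tpar u 3 + 2*PI/3 + 2 * INR 0 * PI) by (unfold tpar; simpl; field).
    destruct (cs_of _ _ _ e2) as [c2 s2]. destruct (cs_of _ _ _ e3) as [c3 s3].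
    apply (core a b c u (tpar u 3) (tpar u 1) (tpar u 2) H); auto; congruence.
Qed.

Theorem proposition8p3 (a b c u : R) (H : pt)
  (hab : a > b) (hb : b > 0) (hc : c > 0) (hc2 : c ^ 2 = a ^ 2 - b ^ 2)
  (hH : is_orthocenter (Pi a b u 1) (Pi a b u 2) (Pi a b u 3) H) :
  let M := Pe a b u in
  (forall i j k : nat, perm3 i j k ->
     Pi a b u i <> Pi2 a b c u i /\
     on_perp (Pi2 a b c u i) (Pi a b u i) (Pi a b u j) (Pi a b u k) /\
     on_line H (Pi a b u i) (Pi2 a b c u i) /\
     on_perp H (Pi2 a b c u i) (Pi a b u j) (Pi a b u k)) /\
  perspector (Pi a b u 1) (Pi a b u 2) (Pi a b u 3)
             (Pi2 a b c u 1) (Pi2 a b c u 2) (Pi2 a b c u 3) H /\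
  (forall i j k : nat, perm3 i j k ->
     on_perp (popp M) (Pi a b u i) (Pi2 a b c u j) (Pi2 a b c u k)) /\
  orthologic_with_centers (Pi a b u 1) (Pi a b u 2) (Pi a b u 3)
             (Pi2 a b c u 1) (Pi2 a b c u 2) (Pi2 a b c u 3) (popp M) H.
Proof.
  intro M.
  destruct hH as [_ [h1 [h2 h3]]].
  destruct (core_i a b c u H 1 2 3 hab hb hc hc2 ltac:(auto) h1) as [A1 [B1 [C1 [D1 E1]]]].
  destruct (core_i a b c u H 2 3 1 hab hb hc hc2 ltac:(auto) h2) as [A2 [B2 [C2 [D2 E2]]]].
  destruct (core_i a b c u H 3 1 2 hab hb hc hc2 ltac:(auto) h3) as [A3 [B3 [C3 [D3 E3]]]].
  split; [|split; [|split]].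
  - intros i j k [hi [hj [hk [n1 [n2 n3]]]]].
    destruct hi as [ei|[ei|ei]]; destruct hj as [ej|[ej|ej]]; destruct hk as [ek|[ek|ek]]; subst i j k;
      try congruence; (split; [|split; [|split]]); auto using on_perp_swap.
  - split; [|split]; auto.
  - intros i j k [hi [hj [hk [n1 [n2 n3]]]]].
    destruct hi as [ei|[ei|ei]]; destruct hj as [ej|[ej|ej]]; destruct hk as [ek|[ek|ek]]; subst i j k;
      try congruence; auto using on_perp_swap.
  - split; (split; [|split]); auto.
Qed.
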